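(* Let $m\geq 1$ and for each $i\geq 1$ let $\Lambda_i=a_1^{(i)}\mathbb{Z}\times a_2^{(i)}\mathbb{Z}\times\dots\times a_m^{(i)}\mathbb{Z}$ with $(a_1^{(i)},\dots,a_m^{(i)})\in\mathbb{N}^m\setminus\{(1,\dots,1)\}$. Let $\eta=\mathbb{1}_{\mathbb{Z}^m\setminus\bigcup_{i\geq1}\Lambda_i}\in\{0,1\}^{\mathbb{Z}^m}$ and $X_\eta$ its orbit closure. Then $(X_\eta,(S_{\mathbf{n}})_{\mathbf{n}\in\mathbb{Z}^m})$ is proximal if and only if $\{\Lambda_i\}_{i\geq1}$ contains an infinite subset of pairwise coprime lattices.
   Context: The shift on $\{0,1\}^{\mathbb{Z}^m}$ is $(S_{\mathbf{n}}x)_{\mathbf{g}}=x_{\mathbf{g}+\mathbf{n}}$; $X_\eta$ is the closure (product topology) of $\{S_{\mathbf{n}}\eta\}$. A system is proximal if every pair $(x,y)$ of its points satisfies $\liminf_{\mathbf{n}\to\infty}D(S_{\mathbf{n}}x,S_{\mathbf{n}}y)=0$ for a compatible metric $D$. Two proper subgroups $\Lambda,\Lambda'$ of $\mathbb{Z}^m$ are coprime if $\Lambda+\Lambda'=\mathbb{Z}^m$. *)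

(* Defs.v *)
From HB Require Import structures.
From mathcomp Require Import all_boot all_order all_algebra.
From Stdlib Require Import ClassicalEpsilon.
Set Implicit Arguments. Unset Strict Implicit. Unset Printing Implicit Defensive.
Import Order.TTheory GRing.Theory Num.Theory.
Local Open Scope ring_scope.

Definition pt (m : nat) := 'I_m -> int.
Definition ptadd m (g n : pt m) : pt m := fun j => g j + n j.

Definition config (m : nat) := pt m -> bool.

Definition shift m (n : pt m) (x : config m) : config m := fun g => x (ptadd g n).

Definition inbox m (N : nat) (g : pt m) : Prop := forall j, (`|g j| <= N)%N.

(* Orbit closure X_eta in the product topology: x is a limit of shifts of eta,
   i.e. every finite window of x agrees with the same window of some S_n eta. *)
Definition orbit_closure m (eta : config m) : config m -> Prop :=
  fun x => forall N : nat, exists n : pt m,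
      forall g, inbox N g -> x g = shift n eta g.

(* liminf_{n -> oo} D(S_n x, S_n y) = 0 for the standard (compatible) metric
   on the product space: for every window size N and every bound K there is n
   with |n|_oo > K such that S_n x and S_n y agree on [-N,N]^m. *)
Definition proximal_pair m (x y : config m) : Prop :=
  forall N K : nat, exists n : pt m,
      (exists j, (K < `|n j|)%N) /\
      forall g, inbox N g -> shift n x g = shift n y g.

Definition proximal m (X : config m -> Prop) : Prop :=
  forall x y, X x -> X y -> proximal_pair x y.

Definition inLam m (a : 'I_m -> nat) (g : pt m) : Prop :=
  forall j, (Posz (a j) %| g j)%Z.

Definition coprime_lat m (a b : 'I_m -> nat) : Prop :=
  forall g : pt m, exists u v : pt m, inLam a u /\ inLam b v /\ g = ptadd u v.

Definition eta_of m (a : nat -> 'I_m -> nat) : config m :=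
  fun g => if excluded_middle_informative (exists i, inLam (a i) g)
           then false else true.

(* Main.v *)
Require Import Defs.
From HB Require Import structures.
From mathcomp Require Import all_boot all_order all_algebra.
From mathcomp Require Import zify ring.
From Stdlib Require Import ClassicalEpsilon Classical FunctionalExtensionality.
Import Order.TTheory GRing.Theory Num.Theory.
Set Implicit Arguments. Unset Strict Implicit. Unset Printing Implicit Defensive.

Section Helpers.
Local Open Scope ring_scope.

Lemma eta_false m (a : nat -> 'I_m -> nat) h :
  (exists i, inLam (a i) h) -> eta_of a h = false.
Proof. by move=> H; rewrite /eta_of; case: excluded_middle_informative. Qed.

Lemma eta_true m (a : nat -> 'I_m -> nat) h :
  (forall i, ~ inLam (a i) h) -> eta_of a h = true.
Proof.
move=> H; rewrite /eta_of; case: excluded_middle_informative => // -[i Hi].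
by case: (H i).
Qed.

Lemma coprime_lat_coord m (a b : 'I_m -> nat) :
  coprime_lat a b -> forall j, coprime (a j) (b j).
Proof.
move=> H j. have [u [v [Hu [Hv E]]]] := H (fun k => if k == j then 1 else 0).
have := congr1 (fun f => f j) E; rewrite /ptadd /= eqxx => E1.
have d1 : (Posz (gcdn (a j) (b j)) %| u j + v j)%Z.
  apply: rpredD.
  - apply: (dvdz_trans _ (Hu j)); exact: dvdn_gcdl.
  - apply: (dvdz_trans _ (Hv j)); exact: dvdn_gcdr.
by move: d1; rewrite -E1 /coprime -dvdn1.
Qed.

Lemma coord_coprime_lat m (a b : 'I_m -> nat) :
  (forall j, coprime (a j) (b j)) -> coprime_lat a b.
Proof.
move=> H g.
pose uv j := Bezoutz (Posz (a j)) (Posz (b j)).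
exists (fun j => g j * projT1 (uv j) * Posz (a j)).
exists (fun j => g j * sval (projT2 (uv j)) * Posz (b j)).
split; [|split].
- by move=> j; apply: dvdz_mull; apply: dvdzz.
- by move=> j; apply: dvdz_mull; apply: dvdzz.
- apply: functional_extensionality => j; rewrite /ptadd.
  case: (uv j) => u [v E] /=.
  have E' : u * a j + v * b j = 1 by rewrite E /gcdz /= (eqP (H j)).
  by rewrite -!mulrA -mulrDr E' mulr1.
Qed.

Lemma coprime_prod r (M : nat -> nat) q :
  (forall i, (i < r)%N -> coprime (M i) q) -> coprime (\prod_(i < r) M i) q.
Proof.
elim: r => [|r IH] H; first by rewrite big_ord0 /coprime gcd1n.
rewrite big_ord_recr coprimeMl /=; apply/andP; split.
  by apply: IH => i Hi; apply: H; lia.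
by apply: H.
Qed.

Lemma dvd_prod r (M : nat -> nat) i : (i < r)%N -> (M i %| \prod_(k < r) M k)%N.
Proof. by move=> Hi; rewrite (bigD1 (Ordinal Hi)) //=; apply: dvdn_mulr. Qed.

Lemma dvd_prod_seq (F : nat -> nat) s k : k \in s -> (F k %| \prod_(k0 <- s) F k0)%N.
Proof.
elim: s => //= x s IH; rewrite in_cons big_cons => /orP [/eqP -> | H].
  exact: dvdn_mulr.
by apply: dvdn_mull; apply: IH.
Qed.

Lemma crt (r : nat) (M : nat -> nat) (c : nat -> int) :
  (forall i k, (i < r)%N -> (k < r)%N -> i <> k -> coprime (M i) (M k)) ->
  exists x : int, forall i, (i < r)%N -> (Posz (M i) %| x - c i)%Z.
Proof.
elim: r => [|r IH] Hc; first by exists 0.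
have [x Hx] : exists x : int, forall i, (i < r)%N -> (Posz (M i) %| x - c i)%Z.
  by apply: IH => i k Hi Hk; apply: Hc; lia.
pose P := (\prod_(i < r) M i)%N.
have cop : coprime P (M r).
  by apply: coprime_prod => i Hi; apply: Hc; lia.
have [u [v E]] := Bezoutz (Posz P) (Posz (M r)).
have E1 : u * P + v * M r = 1 by rewrite E /gcdz /= (eqP cop).
exists (x + Posz P * (u * (c r - x))) => i Hi.
case: (ltngtP i r) => [Hlt | Hgt | Heq].
- rewrite addrAC; apply: rpredD; first exact: Hx.
  by apply: dvdz_mulr; apply: dvd_prod.
- lia.
- subst i.
  have -> : x + Posz P * (u * (c r - x)) - c r = (c r - x) * (u * P - 1) by ring.
  have -> : u * P - 1 = - (v * M r) by rewrite -E1; ring.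
  apply: dvdz_mull; rewrite rpredN; apply: dvdz_mull; apply: dvdzz.
Qed.

End Helpers.

Lemma build_seq (P : nat -> nat -> Prop) (pick : seq nat -> nat)
  (Hp : forall s k, k \in s -> P (pick s) k) :
  exists phi : nat -> nat, forall i k, (i < k)%N -> P (phi k) (phi i).
Proof.
pose fix L n := if n is n'.+1 then pick (L n') :: L n' else [::].
exists (fun n => pick (L n)) => i k Hik.
apply: Hp.
elim: k Hik => [//|k IH]; rewrite ltnS leq_eqVlt => /orP [/eqP -> | /IH H].
  by rewrite /= mem_head.
by rewrite /= in_cons H orbT.
Qed.
Section Dir1.
Local Open Scope ring_scope.

Lemma caseA_not_prox m (a : nat -> 'I_m -> nat)
  (hpos : forall i j, (0 < a i j)%N) (s : seq nat)
  (Hs : forall i, exists k, k \in s /\ exists j, ~~ coprime (a i j) (a k j)) :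
  ~ proximal (orbit_closure (eta_of a)).
Proof.
move=> Hprox.
pose M := (\prod_(k <- 0%N :: s) \prod_(j < m) a k j)%N.
have dvdM : forall k j, k \in (0%N :: s) -> (a k j %| M)%N.
  move=> k j Hk; apply: (dvdn_trans _ (dvd_prod_seq (fun k => \prod_(j < m) a k j) Hk)).
  by rewrite (bigD1 j) //=; apply: dvdn_mulr.
have Mpos : (0 < M)%N by apply: prodn_gt0 => k; apply: prodn_gt0.
pose e' : pt m := fun _ => -1.
have hx : orbit_closure (eta_of a) (eta_of a).
  move=> N; exists (fun _ => 0) => g _; rewrite /shift /ptadd.
  by congr eta_of; apply: functional_extensionality => j; rewrite addr0.
have hy : orbit_closure (eta_of a) (shift e' (eta_of a)).
  by move=> N; exists e'.
have [n [_ Hag]] := Hprox _ _ hx hy M 0%N.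
pose g : pt m := fun j => ((1 - n j) %% Posz M)%Z.
have Mne0 : Posz M != 0 by rewrite eqz_nat -lt0n.
have Hg : inbox M g.
  move=> j; rewrite /g.
  have h1 := modz_ge0 (1 - n j) Mne0.
  have h2 : ((1 - n j) %% Posz M)%Z < Posz M by apply: ltz_pmod; rewrite ltz_nat.
  lia.
have HM : forall j, (Posz M %| g j + n j - 1)%Z.
  move=> j; rewrite /g.
  have D := divz_eq (1 - n j) (Posz M).
  set q := ((1 - n j) %/ Posz M)%Z in D *.
  set rr := ((1 - n j) %% Posz M)%Z in D *.
  have -> : rr + n j - 1 = - (q * Posz M).
    have -> : rr = (1 - n j) - q * Posz M by rewrite D; ring.
    ring.
  by rewrite rpredN; apply: dvdz_mull; apply: dvdzz.
have := Hag g Hg; rewrite /shift.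
rewrite eta_true; last first.
  move=> i Hin; have [k [Hk [j Hj]]] := Hs i.
  have d1 : (Posz (gcdn (a i j) (a k j)) %| g j + n j)%Z.
    by apply: (dvdz_trans _ (Hin j)); apply: dvdn_gcdl.
  have d2 : (Posz (gcdn (a i j) (a k j)) %| g j + n j - 1)%Z.
    apply: (@dvdz_trans (Posz (a k j))); first exact: dvdn_gcdr.
    apply: (@dvdz_trans (Posz M) _ _ _ (HM j)).
    by apply: (dvdM k j); rewrite in_cons Hk orbT.
  have := rpredB d1 d2.
  have -> : g j + n j - (g j + n j - 1) = 1 by ring.
  by rewrite dvdz1 /= => H1; move: Hj; rewrite /coprime H1.
rewrite eta_false //; exists 0%N => j.
apply: (@dvdz_trans (Posz M) _ _ _ (HM j)); apply: dvdM; exact: mem_head.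
Qed.

Lemma prox_to_coprime m (a : nat -> 'I_m -> nat)
  (hpos : forall i j, (0 < a i j)%N)
  (hne1 : forall i, exists j, a i j <> 1%N) :
  proximal (orbit_closure (eta_of a)) ->
  exists phi : nat -> nat, injective phi /\
    (forall i k, i <> k -> coprime_lat (a (phi i)) (a (phi k))).
Proof.
move=> Hprox.
case: (classic (exists s : seq nat, forall i, exists k, k \in s /\
          exists j, ~~ coprime (a i j) (a k j))) => [[s Hs] | HnA].
  by case: (caseA_not_prox hpos Hs Hprox).
have Hp : forall s : seq nat, exists i, forall k, k \in s -> forall j, coprime (a i j) (a k j).
  move=> s; apply: NNPP => Hn; apply: HnA; exists s => i.
  apply: NNPP => Hn2; apply: Hn; exists i => k Hk j.
  apply: NNPP => Hc; apply: Hn2; exists k; split => //; exists j; exact/negP.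
pose pick s := proj1_sig (constructive_indefinite_description _ (Hp s)).
have Hpick : forall s k, k \in s -> (fun i k => forall j, coprime (a i j) (a k j)) (pick s) k.
  move=> s k Hk; rewrite /pick; case: constructive_indefinite_description => i Hi /=.
  exact: Hi.
have [phi Hphi] := @build_seq (fun i k => forall j, coprime (a i j) (a k j)) pick Hpick.
have cop : forall i k, i <> k -> forall j, coprime (a (phi i) j) (a (phi k) j).
  move=> i k Hik j; case: (ltngtP i k) => [H|H|H] //.
  - by rewrite coprime_sym; apply: Hphi.
  - by apply: Hphi.
exists phi; split.
  move=> i k E; apply: NNPP => Hik.
  have [j Hj] := hne1 (phi i).
  have := cop i k Hik j; rewrite -E /coprime gcdnn => /eqP; exact: Hj.
by move=> i k Hik; apply: coord_coprime_lat; apply: cop.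
Qed.

End Dir1.
Section Dir2.
Local Open Scope ring_scope.

Lemma coprime_to_prox m (hm : (1 <= m)%N) (a : nat -> 'I_m -> nat)
  (hpos : forall i j, (0 < a i j)%N) (phi : nat -> nat)
  (Hcop : forall i k, i <> k -> coprime_lat (a (phi i)) (a (phi k))) :
  proximal (orbit_closure (eta_of a)).
Proof.
move=> x y hx hy N K.
pose F := {ffun 'I_m -> 'I_(N.*2).+1}.
pose fpt (f : F) : pt m := fun j => Posz (f j) - Posz N.
pose r := ((size (enum F)).*2)%N.
pose Q := (\prod_(i < r) \prod_(j < m) a (phi i) j)%N.
have Qpos : (0 < Q)%N by apply: prodn_gt0 => i; apply: prodn_gt0.
have dvdQ : forall i j, (i < r)%N -> (a (phi i) j %| Q)%N.
  move=> i j Hi; apply: (dvdn_trans _ (dvd_prod (fun i => \prod_(j < m) a (phi i) j) Hi)).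
  by rewrite (bigD1 j) //=; apply: dvdn_mulr.
pose N' := (N + K.+2 * Q)%N.
have [t Ht] := hx N'.
have [t' Ht'] := hy N'.
pose f0 : F := [ffun _ => ord0].
pose gf (i : nat) : pt m := fpt (nth f0 (enum F) i./2).
pose c (j : 'I_m) (i : nat) : int :=
  if odd i then - (gf i j + t' j) else - (gf i j + t j).
have Hcrt : forall j, exists x0 : int, forall i, (i < r)%N ->
    (Posz (a (phi i) j) %| x0 - c j i)%Z.
  move=> j; apply: crt => i k _ _ Hik.
  exact: (coprime_lat_coord (Hcop i k Hik)).
have [n0 Hn0] := fin_all_exists Hcrt.
have Qne0 : Posz Q != 0 by rewrite eqz_nat -lt0n.
pose n : pt m := fun j => ((n0 j %% Posz Q)%Z + Posz (K.+1 * Q)%N).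
have Hn : forall j i, (i < r)%N -> (Posz (a (phi i) j) %| n j - c j i)%Z.
  move=> j i Hi.
  have -> : n j - c j i = (n0 j - c j i) + (n j - n0 j) by ring.
  apply: rpredD; first exact: Hn0.
  apply: (@dvdz_trans (Posz Q)); first exact: dvdQ.
  have D := divz_eq (n0 j) (Posz Q).
  rewrite /n.
  set q := (n0 j %/ Posz Q)%Z in D *.
  set rr := (n0 j %% Posz Q)%Z in D *.
  have -> : rr + Posz (K.+1 * Q)%N - n0 j = (Posz K.+1 - q) * Posz Q.
    rewrite D PoszM; ring.
  by apply: dvdz_mull; apply: dvdzz.
have Hnb : forall j, Posz (K.+1 * Q)%N <= n j < Posz (K.+2 * Q)%N.
  move=> j; rewrite /n.
  have h1 := modz_ge0 (n0 j) Qne0.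
  have h2 : (n0 j %% Posz Q)%Z < Posz Q by apply: ltz_pmod; rewrite ltz_nat.
  have -> : (K.+2 * Q = K.+1 * Q + Q)%N by rewrite mulSn addnC.
  lia.
exists n; split.
  exists (Ordinal hm).
  have := Hnb (Ordinal hm).
  have : (K.+1 <= K.+1 * Q)%N by rewrite leq_pmulr.
  lia.
move=> g Hg.
pose f : F := [ffun j => inord (absz (g j + Posz N))].
have Hf : fpt f = g.
  apply: functional_extensionality => j; rewrite /fpt /f ffunE.
  have Hgj := Hg j.
  rewrite inordK; last by lia.
  lia.
have fin : f \in enum F by rewrite mem_enum.
set k := index f (enum F).
have Hk : (k < size (enum F))%N by rewrite index_mem.
have Hnth : nth f0 (enum F) k = f by rewrite nth_index.
have Hin : inbox N' (ptadd g n).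
  move=> j; have := Hnb j; have := Hg j; rewrite /ptadd /N'; lia.
rewrite /shift Ht // Ht' // /shift.
rewrite !eta_false //.
- exists (phi (k.*2).+1) => j.
  have := Hn j (k.*2).+1 ltac:(rewrite /r; lia).
  rewrite /c /= odd_double /= /gf /= uphalf_double Hnth Hf /ptadd.
  by have -> : n j - - (g j + t' j) = g j + n j + t' j by ring.
- exists (phi k.*2) => j.
  have := Hn j k.*2 ltac:(rewrite /r; lia).
  rewrite /c /= odd_double /= /gf /= doubleK Hnth Hf /ptadd.
  by have -> : n j - - (g j + t j) = g j + n j + t j by ring.
Qed.

End Dir2.

Theorem corollary1p3 (m : nat) (hm : (1 <= m)%N)
  (a : nat -> 'I_m -> nat)
  (hpos : forall i j, (0 < a i j)%N)
  (hne1 : forall i, exists j, a i j <> 1%N) :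
  proximal (orbit_closure (eta_of a)) <->
  exists phi : nat -> nat, injective phi /\
    (forall i k, i <> k -> coprime_lat (a (phi i)) (a (phi k))).
Proof.
split; first exact: prox_to_coprime.
by move=> [phi [_ H]]; apply: (coprime_to_prox hm hpos H).
Qed.
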